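(* Let \((G,\hat{k})\) be an instance with \(\mathrm{surplus}(G)\ge 2\) given to one of Branching Rules 1 or 2 (which applies to it), and let \((G_i,\hat{k}_i)\) be any instance output by the rule. Then \(\hat{k}_i\leq\hat{k}-1\).
   Context: All graphs are finite, undirected and simple. \(MM(G)\) is the size of a maximum matching; \(LP(G)\) is the optimum value of the LP: minimize \(\sum_v x_v\) subject to \(x_u+x_v\ge1\) for each edge \(\{u,v\}\) and \(0\le x_v\le1\). \(\mathrm{surplus}(G)\) is the minimum of \(|N(Z)|-|Z|\) over nonempty independent sets \(Z\), where \(N(Z)\) is the set of vertices outside \(Z\) adjacent to \(Z\). For an instance \((G,\hat{k})\), let \(k=(2LP(G)-MM(G))+\hat{k}\), so \(\hat{k}=k+MM(G)-2LP(G)\). The Gallai–Edmonds decomposition of a graph \(H\) is \(V(H)=O\uplus I\uplus P\) where \(O\) is the set of vertices left unsaturated by some maximum matching of \(H\), \(I=N(O)\), \(P=V(H)\setminus(O\cup I)\). \(G\setminus X\) denotes \(G[V(G)\setminus X]\). With \(O\uplus I\uplus P\) the Gallai–Edmonds decomposition of \(G\): Branching Rule 1 applies iff \(G[I\cup P]\) has an edge \(\{u,v\}\); it outputs \((G_1,\hat{k}_1),(G_2,\hat{k}_2)\) with \(G_1=G\setminus\{u\}\), \(G_2=G\setminus\{v\}\), \(k_i=k-1\), \(\hat{k}_i=k_i+MM(G_i)-2LP(G_i)\). Branching Rule 2 applies iff Rule 1 does not: pick \(u\in O\) with two neighbours \(v,w\in O\); let \(G'=G\setminus\{u\}\) with Gallai–Edmonds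 decomposition \(O'\uplus I'\uplus P'\), and pick an edge \(\{x,y\}\) of \(G'[P']\); output \((G_1,\hat{k}_1),(G_2,\hat{k}_2),(G_3,\hat{k}_3)\) with \(G_1=G\setminus\{v,w\}\), \(G_2=G'\setminus\{x\}\), \(G_3=G'\setminus\{y\}\), \(k_i=k-2\), \(\hat{k}_i=k_i+MM(G_i)-2LP(G_i)\). *)

(* Defs.v *)
From HB Require Import structures.
From mathcomp Require Import all_boot all_order all_algebra.
From mathcomp Require Import boolp classical_sets reals.
Set Implicit Arguments. Unset Strict Implicit. Unset Printing Implicit Defensive.
Import Order.TTheory GRing.Theory Num.Theory.

(* A finite simple graph is given by a symmetric irreflexive relation [e] on a
   finite type [T] together with a vertex set [V : {set T}]; the graph is the
   one induced by [e] on [V].  Vertex deletion G \ X is then [V :\: X]. *)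

Section Graphs.
Variables (T : finType) (e : rel T).

Definition is_matching (V : {set T}) (M : {set {set T}}) : bool :=
  [forall S in M, exists u, exists v,
      [&& u \in V, v \in V, e u v & S == [set u; v]]] &&
  [forall S1 in M, forall S2 in M, (S1 != S2) ==> [disjoint S1 & S2]].

Definition MM (V : {set T}) : nat :=
  \max_(M : {set {set T}} | is_matching V M) #|M|.

Definition is_max_matching (V : {set T}) (M : {set {set T}}) : bool :=
  is_matching V M && (#|M| == MM V).

Definition saturates (M : {set {set T}}) (x : T) : bool := [exists S in M, x \in S].

Definition nbhd (V Z : {set T}) : {set T} :=
  [set y in V | (y \notin Z) && [exists z in Z, e z y]].

Definition independent (V Z : {set T}) : bool :=
  (Z \subset V) && [forall u in Z, forall v in Z, ~~ e u v].

Definition GE_O (V : {set T}) : {set T} :=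
  [set x in V | [exists M, is_max_matching V M && ~~ saturates M x]].
Definition GE_I (V : {set T}) : {set T} := nbhd V (GE_O V).
Definition GE_P (V : {set T}) : {set T} := V :\: (GE_O V :|: GE_I V).

Variable R : realType.
Local Open Scope ring_scope.

Definition LP_feasible (V : {set T}) (x : T -> R) : Prop :=
  (forall v, v \in V -> 0 <= x v <= 1) /\
  (forall u v, u \in V -> v \in V -> e u v -> 1 <= x u + x v).

Definition LP (V : {set T}) : R :=
  inf (fun s : R => exists x : T -> R, LP_feasible V x /\ s = \sum_(v in V) x v).

Definition surplus (V : {set T}) : R :=
  inf (fun s : R => exists Z : {set T},
         [/\ independent V Z, Z != finset.set0 & s = (#|nbhd V Z|)%:R - (#|Z|)%:R]).

Definition k_of (V : {set T}) (khat : R) : R := 2 * LP V - (MM V)%:R + khat.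

Definition khat_of (V : {set T}) (k : R) : R := k + (MM V)%:R - 2 * LP V.

End Graphs.

(* Main.v *)
Require Import Defs.
From HB Require Import structures.
From mathcomp Require Import all_boot all_order all_algebra.
From mathcomp Require Import boolp classical_sets reals.
Import Order.TTheory GRing.Theory Num.Theory.
Set Implicit Arguments. Unset Strict Implicit. Unset Printing Implicit Defensive.
Lemma matchingP (T : finType) (e : rel T) (V : {set T}) (M : {set {set T}}) :
  reflect ((forall S, S \in M -> exists u v, [/\ u \in V, v \in V, e u v & S = [set u; v]]) /\
           (forall S1 S2, S1 \in M -> S2 \in M -> S1 != S2 -> [disjoint S1 & S2]))
          (is_matching e V M).
Proof.
apply: (iffP andP) => [[/forall_inP H1 /forall_inP H2]|[H1 H2]]; split.
- move=> S /H1 /existsP [u /existsP [v /and4P [Hu Hv He /eqP ->]]]; by exists u, v.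
- move=> S1 S2 /H2 /forall_inP H S2M; exact/implyP/H.
- apply/forall_inP => S /H1 [u [v [Hu Hv He ->]]]; apply/existsP; exists u; apply/existsP; exists v.
  by rewrite Hu Hv He eqxx.
- apply/forall_inP => S1 S1M; apply/forall_inP => S2 S2M; apply/implyP; exact: H2.
Qed.

Lemma satP (T : finType) (M : {set {set T}}) q :
  reflect (exists2 S, S \in M & q \in S) (saturates M q).
Proof. apply: (iffP existsP) => [[S /andP [? ?]]|[S ? ?]]; [by exists S | exists S; exact/andP]. Qed.

Lemma match_uniq (T : finType) (e : rel T) (V : {set T}) M S1 S2 q :
  is_matching e V M -> S1 \in M -> S2 \in M -> q \in S1 -> q \in S2 -> S1 = S2.
Proof.
move=> /matchingP [_ H] M1 M2 q1 q2; apply/eqP; apply/negPn/negP => /(H _ _ M1 M2) D.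
by rewrite (disjointFr D q1) in q2.
Qed.

Lemma matching_le (T : finType) (e : rel T) (V : {set T}) M :
  is_matching e V M -> #|M| <= MM e V.
Proof. move=> H; exact: (@leq_bigmax_cond _ (is_matching e V) (fun M => #|M|) M H). Qed.

Lemma matching0 (T : finType) (e : rel T) (V : {set T}) : is_matching e V finset.set0.
Proof. by apply/matchingP; split => [S|S1 S2]; rewrite inE. Qed.

Lemma MM_exists (T : finType) (e : rel T) (V : {set T}) :
  exists M, is_max_matching e V M.
Proof.
have : #|is_matching e V| > 0 by apply/card_gt0P; exists finset.set0; exact: matching0.
move=> /(@eq_bigmax_cond _ _ (fun M : {set {set T}} => #|M|)) [M HM Heq].
exists M; rewrite unfold_in in HM; apply/andP; split; first exact: HM.
by rewrite /MM -Heq.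
Qed.

Lemma matching_sub (T : finType) (e : rel T) (V W : {set T}) M :
  is_matching e V M -> V \subset W -> is_matching e W M.
Proof.
move=> /matchingP [H1 H2] VW; apply/matchingP; split => // S /H1 [u [v [Hu Hv He ->]]].
exists u, v; split => //; [exact: (fintype.subsetP VW u Hu)|exact: (fintype.subsetP VW v Hv)].
Qed.

Lemma MM_mono (T : finType) (e : rel T) (V W : {set T}) :
  V \subset W -> MM e V <= MM e W.
Proof.
move=> VW; have [M /andP [HM /eqP <-]] := MM_exists e V.
exact/matching_le/(matching_sub HM VW).
Qed.

Lemma matching_restr (T : finType) (e : rel T) (V X : {set T}) M :
  is_matching e V M -> (forall x, x \in X -> ~~ saturates M x) -> is_matching e (V :\: X) M.
Proof.
move=> HM HX; have /matchingP [H1 H2] := HM; apply/matchingP; split => // S SM.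
have [u [v [Hu Hv He SE]]] := H1 S SM; exists u, v; split => //; rewrite inE ?Hu ?Hv andbT;
  apply/negP => /HX /satP; apply; exists S => //; by rewrite SE !inE eqxx ?orbT.
Qed.

Lemma augment (T : finType) (e : rel T) (V : {set T}) M a b :
  is_matching e V M -> a \in V -> b \in V -> e a b -> ~~ saturates M a -> ~~ saturates M b ->
  #|M| < MM e V.
Proof.
move=> HM aV bV ab na nb.
have nin : [set a; b] \notin M.
  apply/negP => H; move/satP: na; apply; exists [set a; b] => //; by rewrite !inE eqxx.
suff : is_matching e V ([set a; b] |: M) by move/matching_le; rewrite cardsU1 nin.
have /matchingP [H1 H2] := HM.
apply/matchingP; split.
- move=> S; rewrite in_setU1 => /orP [/eqP ->|/H1 //]; by exists a, b.
- have key : forall S, S \in M -> [disjoint [set a; b] & S].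
    move=> S SM; rewrite disjoint_sym; apply/pred0P => x /=; apply/negP => /andP [xS].
    rewrite !inE => /orP [] /eqP xe; subst x; [move/satP: na|move/satP: nb]; apply; by exists S.
  move=> S1 S2; rewrite !in_setU1 => /orP [/eqP ->|S1M] /orP [/eqP ->|S2M]; rewrite ?eqxx //.
  + by move=> _; apply: key.
  + by move=> _; rewrite disjoint_sym; apply: key.
  + by apply: H2.
Qed.

Lemma swap (T : finType) (e : rel T) (V : {set T}) N0 S c d :
  is_max_matching e V N0 -> S \in N0 -> c \in S -> c \in V -> d \in V -> e c d ->
  ~~ saturates N0 d ->
  [/\ is_max_matching e V ([set c; d] |: (N0 :\ S)),
      [set c; d] |: (N0 :\ S) \subset [set c; d] |: N0 &
      forall q, saturates ([set c; d] |: (N0 :\ S)) q =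
                [|| q == c, q == d | (q \notin S) && saturates N0 q]].
Proof.
move=> /andP [HM /eqP HC] SN cS cV dV cd nd.
have U := match_uniq HM.
have nin : [set c; d] \notin N0 :\ S.
  apply/negP; rewrite !inE => /andP [ne H].
  by move/eqP: ne; apply; apply: (U _ _ c H SN) => //; rewrite !inE eqxx.
have key : forall S2, S2 \in N0 :\ S -> [disjoint [set c; d] & S2].
  move=> S2; rewrite !inE => /andP [ne S2N]; rewrite disjoint_sym; apply/pred0P => x /=.
  apply/negP => /andP [xS]; rewrite !inE => /orP [] /eqP xe; subst x.
  - by move/eqP: ne; apply; apply: (U _ _ c S2N SN).
  - by move/satP: nd; apply; exists S2.
have /matchingP [H1 H2] := HM.
have HN : is_matching e V ([set c; d] |: (N0 :\ S)).
  apply/matchingP; split.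
  - move=> S'; rewrite in_setU1 => /orP [/eqP ->|]; first by exists c, d.
    by rewrite inE => /andP [_ /H1].
  - move=> S1 S2; rewrite !in_setU1 => /orP [/eqP ->|S1M] /orP [/eqP ->|S2M]; rewrite ?eqxx //.
    + by move=> _; apply: key.
    + by move=> _; rewrite disjoint_sym; apply: key.
    + move: S1M S2M; rewrite !inE => /andP [_ S1M] /andP [_ S2M]; by apply: H2.
split.
- by rewrite /is_max_matching HN /= cardsU1 nin -HC [#|N0|](cardsD1 S) SN.
- apply/fintype.subsetP => S'; rewrite !in_setU1 => /orP [->//|]; rewrite inE => /andP [_ ->].
  by rewrite orbT.
- move=> q; apply/idP/idP.
  + move/satP => [S' ]; rewrite in_setU1 => /orP [/eqP ->|]; first by rewrite !inE => /orP [->|->]; rewrite ?orbT.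
    rewrite inE => /andP [ne S'N] qS'; apply/orP; right; apply/orP; right.
    apply/andP; split; last by apply/satP; exists S'.
    apply/negP => qS; have E := U _ _ q S'N SN qS' qS; by rewrite E !inE eqxx in ne.
  + move=> /orP [qc|/orP [qd|/andP [nqS /satP [S2 S2N qS2]]]].
    * apply/satP; exists [set c; d]; by rewrite ?in_setU1 ?eqxx // !inE qc.
    * apply/satP; exists [set c; d]; by rewrite ?in_setU1 ?eqxx // !inE qd orbT.
    * apply/satP; exists S2 => //; rewrite in_setU1 inE S2N andbT; apply/orP; right.
      apply/negP; rewrite !inE => /eqP E; subst S2; by rewrite qS2 in nqS.
Qed.

Lemma set2C (T : finType) (a b : T) : [set a; b] = [set b; a].
Proof. by apply/setP => x; rewrite !inE orbC. Qed.

Lemma partner (T : finType) (e : rel T) (e_sym : symmetric e) (V : {set T}) M S p :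
  is_matching e V M -> S \in M -> p \in S ->
  exists z, [/\ S = [set p; z], p \in V, z \in V & e p z].
Proof.
move=> /matchingP [H1 _] /H1 [u [v [uV vV uv ->]]]; rewrite !inE => /orP [] /eqP ->.
- by exists v.
- by exists u; rewrite set2C e_sym.
Qed.

Lemma alt (T : finType) (e : rel T) (e_sym : symmetric e) (e_irr : irreflexive e)
  (V : {set T}) (M : {set {set T}}) (n : nat) :
  forall M' p, #|M' :\: M| < n -> is_max_matching e V M -> is_max_matching e V M' ->
  saturates M p -> ~~ saturates M' p ->
  exists N t, [/\ is_max_matching e V N, ~~ saturates N p, N \subset M :|: M' &
                forall q, ~~ saturates M q -> q != t -> ~~ saturates N q].
Proof.
elim: n => [|n IH] M' p //.
move=> Hsz HM HM' /satP [S0 S0M pS0] nM'.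
have HMm := (andP HM).1; have HM'm := (andP HM').1.
have [z [S0E pV zV epz]] := partner e_sym HMm S0M pS0.
have pz : p != z by apply/eqP => E; subst z; by rewrite e_irr in epz.
have zS0 : z \in S0 by rewrite S0E !inE eqxx orbT.
have satMz : saturates M z by apply/satP; exists S0.
case: (boolP (saturates M' z)) => [/satP [S1 S1M zS1]|nz].
2: by have := augment HM'm pV zV epz nM' nz; rewrite (eqP (andP HM').2) ltnn.
have [z' [S1E _ z'V ezz']] := partner e_sym HM'm S1M zS1.
have z'p : z' != p.
  apply/eqP => E; subst z'; move/satP: nM'; apply; exists S1 => //; by rewrite S1E !inE eqxx orbT.
have zz' : z != z' by apply/eqP => E; subst z'; by rewrite e_irr in ezz'.
have z'S1 : z' \in S1 by rewrite S1E !inE eqxx orbT.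
have S1sub : S1 \in M :|: M' by rewrite inE S1M orbT.
case: (boolP (saturates M z')) => [satMz'|nz'].
-
  have ezp : e z p by rewrite e_sym.
  have [HM'1 sub1 char1] := swap HM' S1M zS1 zV pV ezp nM'.
  set M'1 := [set z; p] |: (M' :\ S1) in HM'1 sub1 char1.
  have zpM : [set z; p] \in M by rewrite set2C -S0E.
  have S1nM : S1 \notin M.
    apply/negP => S1M'; have E := match_uniq HMm S1M' S0M zS1 zS0.
    move: z'S1; rewrite E S0E !inE => /orP [] /eqP E'; subst z'; by rewrite eqxx in z'p zz'.
  have Hsz1 : #|M'1 :\: M| < n.
    have sub : M'1 :\: M \subset (M' :\: M) :\ S1.
      apply/fintype.subsetP => S; rewrite !inE => /andP [nSM /orP [/eqP SE|/andP [-> ->]]].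
      + by subst S; rewrite zpM in nSM.
      + by rewrite nSM.
    have S1in : S1 \in M' :\: M by rewrite inE S1nM S1M.
    move: Hsz; rewrite (cardsD1 S1) S1in add1n ltnS; exact: leq_ltn_trans (subset_leq_card sub).
  have nz'1 : ~~ saturates M'1 z'.
    by rewrite char1 negb_or negb_or (negbTE z'p) eq_sym (negbTE zz') /= z'S1.
  have [N1 [t [HN1 nN1 subN1 qN1]]] := IH M'1 z' Hsz1 HM HM'1 satMz' nz'1.
  have subN1' : N1 \subset M :|: M'.
    apply: (fintype.subset_trans subN1); apply/fintype.subsetP => S; rewrite finset.in_setU => /orP [SM|HS]; first by rewrite finset.in_setU SM.
    have := fintype.subsetP sub1 _ HS; rewrite !inE => /orP [/eqP ->|->]; by rewrite ?zpM ?orbT.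
  case: (boolP (saturates N1 p)) => [/satP [S2 S2N1 pS2]|np]; last by exists N1, t.
  have S0N1 : S0 \in N1.
    have : S2 \in M :|: M'1 by exact: (fintype.subsetP subN1).
    rewrite inE => /orP [S2M|].
    + by rewrite -(match_uniq HMm S2M S0M pS2 pS0).
    + rewrite in_setU1 => /orP [/eqP E|]; first by rewrite S0E set2C -E.
      rewrite inE => /andP [_ S2M']; by move/satP: nM'; case; exists S2.
  have [HN subN charN] := swap HN1 S0N1 zS0 zV z'V ezz' nN1.
  exists ([set z; z'] |: (N1 :\ S0)), t; split => //.
  + by rewrite charN negb_or negb_or pz eq_sym (negbTE z'p) /= pS0.
  + apply: (fintype.subset_trans subN); apply/fintype.subsetP => S; rewrite in_setU1 => /orP [/eqP ->|].
    * by rewrite -S1E.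
    * exact: (fintype.subsetP subN1').
  + move=> q nq qt; rewrite charN (negbTE (qN1 q nq qt)) andbF orbF negb_or.
    apply/andP; split; apply/eqP => E; subst q; by rewrite ?satMz ?satMz' in nq.
-
  have [HN subN charN] := swap HM S0M zS0 zV z'V ezz' nz'.
  exists ([set z; z'] |: (M :\ S0)), z'; split => //.
  + by rewrite charN negb_or negb_or pz eq_sym (negbTE z'p) /= pS0.
  + apply: (fintype.subset_trans subN); apply/fintype.subsetP => S; rewrite in_setU1 => /orP [/eqP ->|].
    * by rewrite -S1E.
    * by rewrite inE => ->.
  + move=> q nq qt; rewrite charN (negbTE nq) andbF orbF negb_or qt andbT.
    by apply/eqP => E; subst q; rewrite satMz in nq.
Qed.

Lemma sat_in (T : finType) (e : rel T) (W : {set T}) M x :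
  is_matching e W M -> saturates M x -> x \in W.
Proof.
move=> /matchingP [H1 _] /satP [S /H1 [u [v [uW vW _ ->]]]]; by rewrite !inE => /orP [] /eqP ->.
Qed.

Lemma MM_drop1 (T : finType) (e : rel T) (V : {set T}) x :
  x \in V -> x \notin GE_O e V -> MM e (V :\ x) < MM e V.
Proof.
move=> xV nO; have [M /andP [HM /eqP HC]] := MM_exists e (V :\ x).
rewrite ltnNge; apply/negP => le.
have HMV : is_matching e V M by apply: (matching_sub HM); apply/fintype.subsetP => y; rewrite !inE => /andP [].
have ns : ~~ saturates M x by apply/negP => /(sat_in HM); rewrite !inE eqxx.
move: nO; rewrite inE xV /=; apply/negP; rewrite negbK; apply/existsP; exists M.
rewrite ns andbT /is_max_matching HMV /= eqn_leq matching_le //= HC; exact: le.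
Qed.

Lemma MM_drop2 (T : finType) (e : rel T) (e_sym : symmetric e) (e_irr : irreflexive e)
  (V : {set T}) u v w :
  u \in GE_O e V -> v \in V -> w \in V -> v != w -> e u v -> e u w ->
  MM e (V :\: [set v; w]) < MM e V.
Proof.
move=> uO vV wV vw uv uw; have [M /andP [HM /eqP HC]] := MM_exists e (V :\: [set v; w]).
rewrite ltnNge; apply/negP => le.
have HMV : is_matching e V M by apply: (matching_sub HM); apply/fintype.subsetP => y; rewrite !inE => /andP [].
have MmaxV : is_max_matching e V M by rewrite /is_max_matching HMV /= eqn_leq matching_le //= HC.
have nsv : ~~ saturates M v by apply/negP => /(sat_in HM); rewrite !inE eqxx.
have nsw : ~~ saturates M w by apply/negP => /(sat_in HM); rewrite !inE eqxx orbT.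
move: uO; rewrite inE => /andP [uV /existsP [M' /andP [HM' nM']]].
have sMu : saturates M u.
  case: (boolP (saturates M u)) => // nu; have := augment HMV uV vV uv nu nsv; by rewrite (eqP (andP MmaxV).2) ltnn.
have [N [t [HN nN _ qN]]] := alt e_sym e_irr (ltnSn #|M' :\: M|) MmaxV HM' sMu nM'.
have HNm := (andP HN).1.
have [vt|wt] : v != t \/ w != t.
  by case: (eqVneq v t) => [E|]; [right; subst t; rewrite eq_sym|left].
- have := augment HNm uV vV uv nN (qN v nsv vt); by rewrite (eqP (andP HN).2) ltnn.
- have := augment HNm uV wV uw nN (qN w nsw wt); by rewrite (eqP (andP HN).2) ltnn.
Qed.

From mathcomp Require Import lra zify.
Local Open Scope ring_scope.
Lemma exmax (R : realType) (T : finType) (P : {set T}) (f : T -> R) p0 :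
  p0 \in P -> exists2 p, p \in P & forall v, v \in P -> f v <= f p.
Proof.
move=> p0P; case: (@arg_maxP _ _ _ p0 (mem P) f p0P) => i Pi H; exists i => // v vP.
Qed.

Lemma major (R : realType) (T : finType) (a b : T -> R) (n : nat) :
  forall P Q : {set T}, (#|P| < n)%N -> (forall v, v \in P -> 0 < a v) ->
  (forall v, v \in Q -> 0 <= b v) ->
  (forall s, 0 < s -> (#|[set v in P | (s <= a v)%R]| <= #|[set v in Q | (s <= b v)%R]|)%N) ->
  \sum_(v in P) a v <= \sum_(v in Q) b v.
Proof.
elim: n => [|n IH] P Q //= HP Ha Hb Hc.
case: (set_0Vmem P) => [->|[p0 p0P]].
  by rewrite big_set0; apply: sumr_ge0.
have [p pP pmax] := exmax a p0P.
have ap := Ha p pP.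
have : (0 < #|[set v in Q | (a p <= b v)%R]|)%N.
  apply: leq_trans (Hc _ ap); apply/card_gt0P; exists p; by rewrite inE pP lexx.
move=> /card_gt0P [q1]; rewrite inE => /andP [q1Q q1b].
have [q qQ qmax] := exmax b q1Q.
have bq : a p <= b q by apply: le_trans q1b (qmax _ q1Q).
rewrite (big_setD1 p pP) (big_setD1 q qQ) /=.
apply: lerD => //; apply: IH.
- by move: HP; rewrite (cardsD1 p P) pP.
- by move=> v; rewrite !inE => /andP [_ /Ha].
- by move=> v; rewrite !inE => /andP [_ /Hb].
- move=> s s0; case: (leP s (a p)) => sap.
  + have := Hc s s0.
    rewrite (cardsD1 p [set v in P | s <= a v]) (cardsD1 q [set v in Q | s <= b v]).
    rewrite !inE pP qQ sap (le_trans sap bq) !add1n ltnS.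
    have -> : [set v in P | s <= a v] :\ p = [set v in P :\ p | s <= a v].
      by apply/setP => v; rewrite !inE andbA.
    have -> : [set v in Q | s <= b v] :\ q = [set v in Q :\ q | s <= b v].
      by apply/setP => v; rewrite !inE andbA.
    by [].
  + have -> : [set v in P :\ p | s <= a v] = finset.set0.
      apply/setP => v; rewrite !inE; apply/negP => /andP [/andP [_ vP] sv].
      have := pmax v vP; lra.
    by rewrite cards0.
Qed.

Lemma feas_lb (R : realType) (T : finType) (e : rel T) (W : {set T}) (x : T -> R) :
  LP_feasible e W x ->
  (forall Z : {set T}, independent e W Z -> Z != finset.set0 -> (#|Z| <= #|nbhd e W Z|)%N) ->
  #|W|%:R / 2 <= \sum_(v in W) x v.
Proof.
move=> [Hx01 Hxe] Hall.
set A := [set v in W | x v < 1/2]; set B := [set v in W | 1/2 < x v].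
have key : \sum_(v in A) (1/2 - x v) <= \sum_(v in B) (x v - 1/2).
  apply: (@major _ _ _ _ #|A|.+1) => //.
  - move=> v; rewrite inE => /andP [_]; lra.
  - move=> v; rewrite inE => /andP [_]; lra.
  - move=> s s0; set Z := [set v in A | (s <= 1/2 - x v)%R].
    case: (eqVneq Z finset.set0) => [->|Zn]; first by rewrite cards0.
    have ZW : forall v, v \in Z -> v \in W /\ x v <= 1/2 - s.
      by move=> v; rewrite !inE => /andP [/andP [vW _] H]; split => //; lra.
    apply: leq_trans (Hall Z _ Zn) _.
      apply/andP; split; first by apply/fintype.subsetP => v /ZW [].
      apply/forall_inP => u /ZW [uW xu]; apply/forall_inP => v /ZW [vW xv]; apply/negP => euv.
      have := Hxe u v uW vW euv; lra.
    apply: subset_leq_card; apply/fintype.subsetP => y.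
    rewrite /nbhd inE => /andP [yW /andP [_ /existsP [z /andP [zZ ezy]]]].
    have [zW xz] := ZW z zZ.
    have := Hxe z y zW yW ezy => h.
    rewrite !inE yW /=; apply/andP; split; lra.
have eqs : \sum_(v in W) x v - #|W|%:R / 2 =
           \sum_(v in B) (x v - 1/2) - \sum_(v in A) (1/2 - x v).
  rewrite [X in _ = X - _](eq_bigl (fun v => (v \in W) && (1/2 < x v))); last by move=> v; rewrite inE.
  rewrite [X in _ = _ - X](eq_bigl (fun v => (v \in W) && (x v < 1/2))); last by move=> v; rewrite inE.
  rewrite !big_mkcondr /= -sumrB.
  have -> : #|W|%:R / 2 = \sum_(v in W) (1/2 : R) by rewrite sumr_const -mulr_natl; lra.
  rewrite -sumrB; apply: eq_bigr => v _.
  case: (ltgtP (x v) (1/2)) => h; lra.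
lra.
Qed.

Lemma LP_ub (R : realType) (T : finType) (e : rel T) (V : {set T}) :
  @LP T e R V <= #|V|%:R / 2.
Proof.
rewrite /LP; set S := (fun s : R => _).
have lb : has_lbound S.
  exists 0 => s [x [[H01 _] ->]]; apply: sumr_ge0 => v vV; by case/andP: (H01 v vV).
apply: (ge_inf lb); exists (fun _ => 1/2); split.
- split => [v _|u v _ _ _]; first (apply/andP; split); lra.
- by rewrite sumr_const -mulr_natl; lra.
Qed.

Lemma LP_lb (R : realType) (T : finType) (e : rel T) (W : {set T}) :
  (forall Z : {set T}, independent e W Z -> Z != finset.set0 -> (#|Z| <= #|nbhd e W Z|)%N) ->
  #|W|%:R / 2 <= @LP T e R W.
Proof.
move=> Hall; rewrite /LP; apply: lb_le_inf.
- exists (\sum_(v in W) (1 : R)), (fun _ => 1); split => //; split => [v _|u v _ _ _]; last lra.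
  by apply/andP; split; lra.
- move=> s [x [Hx ->]]; exact: feas_lb Hx Hall.
Qed.

Lemma hall_sub (R : realType) (T : finType) (e : rel T) (V X : {set T})
  (hs : 2 <= @surplus T e R V) : (#|X| <= 2)%N ->
  forall Z : {set T}, independent e (V :\: X) Z -> Z != finset.set0 ->
    (#|Z| <= #|nbhd e (V :\: X) Z|)%N.
Proof.
move=> HX Z /andP [ZW Zi] Zn.
have indV : independent e V Z.
  apply/andP; split => //; apply: fintype.subset_trans ZW _.
  by apply/fintype.subsetP => v; rewrite inE => /andP [].
have Hle : @surplus T e R V <= #|nbhd e V Z|%:R - #|Z|%:R.
  rewrite /surplus; set S := (fun s : R => _).
  have lb : has_lbound S.
    exists (- #|T|%:R) => s [Z' [_ _ ->]].
    have := max_card (mem Z'); rewrite -(ler_nat R) => h.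
    have : 0 <= (#|nbhd e V Z'|%:R : R) by [].
    lra.
  by apply: (ge_inf lb); exists Z; split.
have : (2 + #|Z| <= #|nbhd e V Z|)%N.
  by rewrite -(ler_nat R) natrD; lra.
have sub : nbhd e V Z \subset nbhd e (V :\: X) Z :|: X.
  apply/fintype.subsetP => y; rewrite /nbhd !inE => /andP [yV H].
  by case: (boolP (y \in X)) => yX; rewrite ?orbT //= yV H.
have := subset_leq_card sub; rewrite cardsU => h1 h2.
have := leq_subr #|nbhd e (V :\: X) Z :&: X| (#|nbhd e (V :\: X) Z| + #|X|).
lia.
Qed.

Lemma ltn_R (R : realType) (m n : nat) : (m < n)%N -> m%:R + 1 <= n%:R :> R.
Proof. by move=> h; rewrite -(natrD _ _ 1) ler_nat addn1. Qed.

Lemma notO_IP (T : finType) (e : rel T) (V : {set T}) y :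
  y \in GE_I e V :|: GE_P e V -> y \in V /\ y \notin GE_O e V.
Proof.
rewrite finset.in_setU => /orP [|].
- by rewrite /GE_I /nbhd finset.in_set => /andP [-> /andP [-> _]].
- by rewrite /GE_P finset.in_setD finset.in_setU negb_or => /andP [/andP [-> _] ->].
Qed.

Lemma O_in (T : finType) (e : rel T) (V : {set T}) y : y \in GE_O e V -> y \in V.
Proof. by rewrite inE => /andP []. Qed.

Lemma P_notO (T : finType) (e : rel T) (V : {set T}) y :
  y \in GE_P e V -> y \in V /\ y \notin GE_O e V.
Proof. by rewrite /GE_P finset.in_setD finset.in_setU negb_or => /andP [/andP [-> _] ->]. Qed.

Lemma card2 (T : finType) (V : {set T}) v w :
  v \in V -> w \in V -> v != w -> #|V| = (#|V :\: [set v; w]| + 2)%N.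
Proof.
move=> vV wV vw.
have -> : V :\: [set v; w] = (V :\ v) :\ w.
  by apply/setP => z; rewrite !inE negb_or; case: (z != v); case: (z != w).
have := cardsD1 v V; have := cardsD1 w (V :\ v); rewrite vV !inE eq_sym vw wV /=.
lia.
Qed.

Unset Implicit Arguments.
Set Strict Implicit.
Set Printing Implicit Defensive.

Theorem lemma13 (R : realType) (T : finType) (e : rel T)
    (e_sym : symmetric e) (e_irr : irreflexive e)
    (V : {set T}) (khat : R)
    (hsurplus : 2 <= @surplus T e R V) :
  (* Branching Rule 1: edge {u,v} in G[I u P]; outputs G\{u}, G\{v}, k_i = k-1 *)
  (forall u v : T,
      u \in GE_I e V :|: GE_P e V -> v \in GE_I e V :|: GE_P e V -> e u v ->
      khat_of e (V :\ u) (k_of e V khat - 1) <= khat - 1 /\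
      khat_of e (V :\ v) (k_of e V khat - 1) <= khat - 1) /\
  (* Branching Rule 2: applies iff Rule 1 does not *)
  ((~ exists u v : T, [/\ u \in GE_I e V :|: GE_P e V,
                          v \in GE_I e V :|: GE_P e V & e u v]) ->
   forall u v w x y : T,
      u \in GE_O e V -> v \in GE_O e V -> w \in GE_O e V -> v != w ->
      e u v -> e u w ->
      x \in GE_P e (V :\ u) -> y \in GE_P e (V :\ u) -> e x y ->
      [/\ khat_of e (V :\: [set v; w]) (k_of e V khat - 2) <= khat - 1,
          khat_of e ((V :\ u) :\ x) (k_of e V khat - 2) <= khat - 1 &
          khat_of e ((V :\ u) :\ y) (k_of e V khat - 2) <= khat - 1]).
Proof.
have LPV := LP_ub R e V.
have r1 : forall u, u \in GE_I e V :|: GE_P e V ->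
    khat_of e (V :\ u) (k_of e V khat - 1) <= khat - 1.
  move=> u /notO_IP [uV nO].
  have hM := MM_drop1 uV nO.
  have hL := LP_lb R (hall_sub hsurplus (X := [set u]) ltac:(by rewrite cards1)).
  have hc : (#|V| = 1 + #|V :\ u|)%N by rewrite (cardsD1 u V) uV.
  move: hM; move/(ltn_R R) => hM.
  have hc' : (#|V|%:R : R) = 1 + #|V :\ u|%:R by rewrite hc natrD.
  rewrite /khat_of /k_of; move: hL LPV hM hc'; lra.
have r2 : forall u x, u \in V -> x \in GE_P e (V :\ u) ->
    khat_of e ((V :\ u) :\ x) (k_of e V khat - 2) <= khat - 1.
  move=> u x uV /P_notO [xVu nO].
  have hM := MM_drop1 xVu nO.
  have hM2 : (MM e (V :\ u) <= MM e V)%N.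
    by apply: MM_mono; apply/fintype.subsetP => z; rewrite inE => /andP [].
  have xV : x \in V by move: xVu; rewrite inE => /andP [].
  have ux : u != x by move: xVu; rewrite !inE eq_sym => /andP [].
  have hc := card2 uV xV ux.
  have hL := LP_lb R (hall_sub hsurplus (X := [set u; x]) ltac:(by rewrite cards2; case: (_ != _))).
  have EE : (V :\ u) :\ x = V :\: [set u; x].
    by apply/setP => z; rewrite !inE negb_or; case: (z != u); case: (z != x).
  rewrite EE; move: hc.
  have hMM : (MM e (V :\: [set u; x]) < MM e V)%N by rewrite -EE; exact: leq_trans hM hM2.
  move: hMM; move/(ltn_R R) => hMM hc.
  have hc' : (#|V|%:R : R) = #|V :\: [set u; x]|%:R + 2 by rewrite hc natrD.
  rewrite /khat_of /k_of; move: hL LPV hMM hc'; lra.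
split.
- move=> u v uI vI _; split; [exact: r1|exact: r1].
- move=> _ u v w x y uO vO wO vw uv uw xP yP _.
  have uV := O_in uO; have vV := O_in vO; have wV := O_in wO.
  split; [|exact: r2|exact: r2].
  have hM := MM_drop2 e_sym e_irr uO vV wV vw uv uw.
  have hc := card2 vV wV vw.
  have hL := LP_lb R (hall_sub hsurplus (X := [set v; w]) ltac:(by rewrite cards2; case: (_ != _))).
  move: hM; move/(ltn_R R) => hM.
  have hc' : (#|V|%:R : R) = #|V :\: [set v; w]|%:R + 2 by rewrite hc natrD.
  rewrite /khat_of /k_of; move: hL LPV hM hc'; lra.
Qed.
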